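(* (i) For all $\tau\in\mathbb{H}$ with $e^{-2\pi\operatorname{Im}\tau}\le\frac13$, $$|\Delta(\tau)|\ge e^{-2\pi\operatorname{Im}\tau}\Big(1-e^{-2\pi\operatorname{Im}\tau}-e^{-4\pi\operatorname{Im}\tau}-\frac{2e^{-4\pi\operatorname{Im}\tau}}{1-e^{-2\pi\operatorname{Im}\tau}}\Big)^{24}.$$ (ii) For all $\tau\in\mathbb{H}$, $$|\Delta(\tau)|\le e^{-2\pi\operatorname{Im}\tau}\Big(1+2e^{-2\pi\operatorname{Im}\tau}+\frac{2e^{-8\pi\operatorname{Im}\tau}}{1-e^{-4\pi\operatorname{Im}\tau}}\Big)^{24}.$$
   Context: $\mathbb{H}$ is the upper half plane, $q=e^{2\pi i\tau}$, and $\Delta(\tau)=q\prod_{n\ge1}(1-q^n)^{24}$. *)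

(* Defs.v *)
From Stdlib Require Import Reals.
From Coquelicot Require Import Coquelicot.
Open Scope R_scope.

Definition Cexp (z : C) : C :=
  (exp (Re z) * cos (Im z), exp (Re z) * sin (Im z)).

Definition qpar (tau : C) : C := Cexp (Cmult (0, 2 * PI) tau).

Fixpoint eta_partial (q : C) (N : nat) : C :=
  match N with
  | O => RtoC 1
  | S M => Cmult (eta_partial q M) (Cpow (Cminus (RtoC 1) (Cpow q (S M))) 24)
  end.

Definition Delta_partial (tau : C) (N : nat) : C :=
  Cmult (qpar tau) (eta_partial (qpar tau) N).

Definition is_Delta (tau : C) (D : C) : Prop :=
  filterlim (Delta_partial tau) eventually (locally D).

(* Main.v *)
Require Import Defs.
From Stdlib Require Import Reals Lia Lra.
From Coquelicot Require Import Coquelicot.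
Open Scope R_scope.


Section Alg.
Variable q : C.

Fixpoint sgn (k : nat) : C := match k with O => RtoC 1 | S k => Copp (sgn k) end.

Fixpoint bp (k n : nat) : C :=
  match n with
  | O => RtoC 1
  | S m => if Nat.leb k m then Cmult (bp k m) (Cminus (RtoC 1) (Cpow q (S m))) else RtoC 1
  end.

Fixpoint tri (k : nat) : nat := match k with O => O | S j => (tri j + S j)%nat end.

Fixpoint csum (f : nat -> C) (n : nat) : C :=
  match n with O => RtoC 0 | S m => Cplus (csum f m) (f m) end.

Lemma bp_Seq k m : bp k (S m) = if Nat.leb k m then Cmult (bp k m) (Cminus (RtoC 1) (Cpow q (S m))) else RtoC 1.
Proof. reflexivity. Qed.

Lemma bp_diag n : bp n n = RtoC 1.
Proof. destruct n; [reflexivity|]. rewrite bp_Seq. rewrite (proj2 (Nat.leb_gt (S n) n)); auto. Qed.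

Lemma bp_S k m : (k <= m)%nat -> bp k (S m) = Cmult (bp k m) (Cminus (RtoC 1) (Cpow q (S m))).
Proof. intros H. rewrite bp_Seq. rewrite (proj2 (Nat.leb_le k m) H). auto. Qed.

Lemma bp_shift j m : (j < m)%nat ->
  bp j m = Cmult (Cminus (RtoC 1) (Cpow q (S j))) (bp (S j) m).
Proof.
  induction m; intros H; [lia|].
  destruct (Nat.eq_dec j m) as [->|Hne].
  - rewrite bp_S by lia. rewrite !bp_diag. ring.
  - rewrite !bp_S by lia. rewrite IHm by lia. ring.
Qed.

Lemma csum_ext f g n : (forall k, (k < n)%nat -> f k = g k) -> csum f n = csum g n.
Proof. induction n; intros H; simpl; auto. rewrite IHn by (intros; apply H; lia). rewrite H by lia. auto. Qed.

Lemma csum_minus f g n : csum (fun k => Cminus (f k) (g k)) n = Cminus (csum f n) (csum g n).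
Proof. induction n; simpl. ring. rewrite IHn. ring. Qed.

Lemma telesc (X Y : nat -> C) n : Y O = RtoC 0 -> (forall k, (k < n)%nat -> Y (S k) = X k) ->
  csum (fun k => Cmult (sgn k) (Cplus (Y k) (X k))) (S n) = Cmult (sgn n) (X n).
Proof.
  intros H0. induction n; intros H.
  - simpl. rewrite H0. ring.
  - change (csum (fun k => Cmult (sgn k) (Cplus (Y k) (X k))) (S (S n))) with
      (Cplus (csum (fun k => Cmult (sgn k) (Cplus (Y k) (X k))) (S n)) (Cmult (sgn (S n)) (Cplus (Y (S n)) (X (S n))))).
    rewrite IHn by (intros; apply H; lia). rewrite H by lia. simpl. ring.
Qed.

Definition term (n k : nat) : C := Cmult (Cmult (sgn k) (bp k n)) (Cpow q (n * k + tri k)).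
Definition L (n : nat) : C := csum (term n) (S n).

Fixpoint Sp (n : nat) : C :=
  match n with
  | O => RtoC 1
  | S m => Cplus (Sp m) (Cmult (sgn (S m))
        (Cplus (Cpow q (S m * S m + tri (S m))) (Cpow q (tri m + S m * S m))))
  end.

Lemma Sp_S m : Sp (S m) = Cplus (Sp m) (Cmult (sgn (S m))
        (Cplus (Cpow q (S m * S m + tri (S m))) (Cpow q (tri m + S m * S m)))).
Proof. reflexivity. Qed.

Lemma L_Sp n : L n = Sp n.
Proof.
  induction n.
  - unfold L, term. simpl. ring.
  - set (X := fun k => Cmult (Cpow q (tri k + S n * k + S n)) (bp k n)).
    set (Y := fun k => Cmult (Cmult (Cpow q (tri k + n * k)) (Cminus (RtoC 1) (Cpow q k))) (bp k n)).
    assert (Hpt : forall k, (k < S n)%nat -> term (S n) k =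
       Cminus (term n k) (Cmult (sgn k) (Cplus (Y k) (X k)))).
    { intros k Hk. unfold term, X, Y. rewrite bp_S by lia.
      replace (S n * k + tri k)%nat with ((tri k + n * k) + k)%nat by nia.
      replace (n * k + tri k)%nat with (tri k + n * k)%nat by nia.
      replace (tri k + S n * k + S n)%nat with ((tri k + n * k) + k + S n)%nat by nia.
      rewrite !Cpow_add_r. ring. }
    unfold L. change (csum (term (S n)) (S (S n))) with
      (Cplus (csum (term (S n)) (S n)) (term (S n) (S n))).
    rewrite (csum_ext _ _ _ Hpt), csum_minus.
    rewrite telesc.
    + fold (L n). rewrite IHn. rewrite Sp_S. unfold term, X.
      rewrite !bp_diag.
      replace (S n * S n + tri (S n))%nat with (S n * S n + tri (S n))%nat by reflexivity.
      replace (tri n + S n * n + S n)%nat with (tri n + S n * S n)%nat by nia.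
      change (sgn (S n)) with (Copp (sgn n)). ring.
    + unfold Y. simpl. ring.
    + intros k Hk. unfold X, Y. rewrite (bp_shift k n Hk).
      replace (tri (S k) + n * S k)%nat with (tri k + S n * k + S n)%nat by (simpl; nia).
      ring.
Qed.

End Alg.


Fixpoint rsum (g : nat -> R) (n : nat) : R :=
  match n with O => 0 | S m => rsum g m + g m end.

Lemma pow_decr (r : R) (a b : nat) : 0 <= r <= 1 -> (b <= a)%nat -> r ^ a <= r ^ b.
Proof.
  intros Hr Hab. induction Hab. lra.
  simpl. assert (0 <= r ^ m) by (apply pow_le; lra). nra.
Qed.

Lemma Cmod_sgn k : Cmod (sgn k) = 1.
Proof. induction k; simpl. apply Cmod_1. rewrite Cmod_opp; auto. Qed.

Lemma csum_norm (f : nat -> C) (g : nat -> R) n :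
  (forall k, (k < n)%nat -> Cmod (f k) <= g k) -> Cmod (csum f n) <= rsum g n.
Proof.
  induction n; intros H; simpl. rewrite Cmod_0; lra.
  eapply Rle_trans. apply Cmod_triangle.
  apply Rplus_le_compat. apply IHn; intros; apply H; lia. apply H; lia.
Qed.

Lemma csum_shift f n : csum f (S n) = Cplus (f O) (csum (fun k => f (S k)) n).
Proof.
  induction n. simpl. ring.
  change (csum f (S (S n))) with (Cplus (csum f (S n)) (f (S n))). rewrite IHn. simpl. ring.
Qed.

Lemma rsum_scal c (g : nat -> R) n : rsum (fun k => c * g k) n = c * rsum g n.
Proof. induction n; simpl. ring. rewrite IHn. ring. Qed.

Lemma tri_ge k : (k <= tri k)%nat.
Proof. induction k; simpl; lia. Qed.

Section Ana.
Variable q : C.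
Variable r : R.
Hypothesis Hr : Cmod q = r.
Hypothesis Hr1 : r < 1.

Lemma r_ge0 : 0 <= r.
Proof. rewrite <- Hr. rewrite Cmod_norm. apply norm_ge_0. Qed.

Definition rs n := rsum (fun k => r ^ (S k)) n.

Lemma rs_S n : rs (S n) = rs n + r ^ (S n).
Proof. reflexivity. Qed.

Lemma rs_eq n : rs n * (1 - r) = r - r ^ (S n).
Proof. induction n. unfold rs; simpl; ring.
  rewrite rs_S. replace ((rs n + r ^ S n) * (1 - r)) with (rs n * (1 - r) + r ^ S n * (1 - r)) by ring.
  rewrite IHn. simpl. ring. Qed.

Lemma rs_ge0 n : 0 <= rs n.
Proof. induction n. unfold rs; simpl; lra. rewrite rs_S. pose proof (pow_le r (S n) r_ge0). lra. Qed.

Lemma rs_bound n : rs n <= r / (1 - r).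
Proof.
  pose proof (rs_eq n). pose proof (pow_le r (S n) r_ge0).
  apply Rmult_le_reg_r with (1 - r). lra.
  unfold Rdiv. rewrite Rmult_assoc, Rinv_l by lra. lra.
Qed.

Lemma Cmod_1mq n : Cmod (Cminus (RtoC 1) (Cpow q n)) <= 1 + r ^ n.
Proof.
  unfold Cminus. eapply Rle_trans. apply Cmod_triangle. rewrite Cmod_opp, Cmod_pow, Cmod_1. rewrite Hr; lra.
Qed.

Lemma Cmod_1mq_ge n : 1 - r ^ n <= Cmod (Cminus (RtoC 1) (Cpow q n)).
Proof.
  pose proof (Cmod_triangle (Cminus (RtoC 1) (Cpow q n)) (Cpow q n)).
  replace (Cplus (Cminus (RtoC 1) (Cpow q n)) (Cpow q n)) with (RtoC 1) in H by ring.
  rewrite Cmod_1, Cmod_pow in H. rewrite Hr in H; lra.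
Qed.

Definition M := exp (r / (1 - r)).

Lemma Cmod_bp_exp k n : Cmod (bp q k n) <= exp (rs n).
Proof.
  induction n.
  - simpl. rewrite Cmod_1. unfold rs; simpl. rewrite exp_0. lra.
  - rewrite bp_Seq. rewrite rs_S, exp_plus.
    assert (1 <= exp (rs n)) by (pose proof (exp_ineq1_le (rs n)); pose proof (rs_ge0 n); lra).
    assert (1 <= exp (r ^ S n)) by (pose proof (exp_ineq1_le (r ^ S n)); pose proof (pow_le r (S n) r_ge0); lra).
    destruct (Nat.leb k n).
    + rewrite Cmod_mult. apply Rmult_le_compat. apply Cmod_ge_0. apply Cmod_ge_0. auto.
      eapply Rle_trans. apply Cmod_1mq. apply exp_ineq1_le.
    + rewrite Cmod_1. nra.
Qed.

Lemma Cmod_bp k n : Cmod (bp q k n) <= M.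
Proof. eapply Rle_trans. apply Cmod_bp_exp. unfold M. destruct (Rle_lt_or_eq_dec _ _ (rs_bound n)).
  left; apply exp_increasing; auto. rewrite e; lra. Qed.

Lemma bp0_S n : bp q 0 (S n) = Cmult (bp q 0 n) (Cminus (RtoC 1) (Cpow q (S n))).
Proof. apply bp_S. lia. Qed.

Lemma Cmod_bp0_ge n : 1 - rs n <= Cmod (bp q 0 n).
Proof.
  induction n.
  - simpl. rewrite Cmod_1. unfold rs; simpl; lra.
  - rewrite bp0_S, Cmod_mult, rs_S.
    pose proof (Cmod_1mq_ge (S n)). pose proof (pow_le r (S n) r_ge0).
    assert (r ^ S n <= 1) by (pose proof r_ge0; change 1 with (r ^ 0); apply pow_decr; [lra|lia]).
    pose proof (rs_ge0 n).
    assert (0 <= 1 - r ^ S n) by lra.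
    assert ((1 - rs n) * (1 - r ^ S n) <= Cmod (bp q 0 n) * Cmod (Cminus (RtoC 1) (Cpow q (S n)))).
    { apply Rle_trans with (Cmod (bp q 0 n) * (1 - r ^ S n)). apply Rmult_le_compat_r; auto.
      apply Rmult_le_compat_l; auto. apply Cmod_ge_0. }
    nra.
Qed.


Definition Bnd := 1 + 2 * r + 2 * r ^ 4 / (1 - r ^ 2).

Lemma Sp_bound_aux n : Cmod (Sp q (S n)) <= 1 + r + r ^ 2 + 2 * r ^ 4 / (1 - r ^ 2) - 2 * r ^ (2 * n + 4) / (1 - r ^ 2).
Proof.
  pose proof r_ge0.
  assert (Hr2 : 0 < 1 - r ^ 2) by (simpl; nra).
  induction n.
  - rewrite Sp_S. simpl Sp. replace (2 * 0 + 4)%nat with 4%nat by lia.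
    replace (1 + r + r ^ 2 + 2 * r ^ 4 / (1 - r ^ 2) - 2 * r ^ 4 / (1 - r ^ 2)) with (1 + (r ^ 2 + r)) by (field; lra).
    eapply Rle_trans. apply Cmod_triangle. rewrite Cmod_1. apply Rplus_le_compat_l.
    rewrite Cmod_mult, Cmod_sgn, Rmult_1_l. eapply Rle_trans. apply Cmod_triangle.
    rewrite !Cmod_pow, Hr. simpl. lra.
  - rewrite Sp_S. eapply Rle_trans. apply Cmod_triangle.
    rewrite Cmod_mult, Cmod_sgn, Rmult_1_l.
    assert (Cmod (Cplus (Cpow q (S (S n) * S (S n) + tri (S (S n)))) (Cpow q (tri (S n) + S (S n) * S (S n))))
      <= 2 * r ^ (2 * n + 4)).
    { eapply Rle_trans. apply Cmod_triangle. rewrite !Cmod_pow, Hr.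
      assert (r ^ (S (S n) * S (S n) + tri (S (S n))) <= r ^ (2 * n + 4)) by (apply pow_decr; [lra|nia]).
      assert (r ^ (tri (S n) + S (S n) * S (S n)) <= r ^ (2 * n + 4)) by (apply pow_decr; [lra|nia]).
      lra. }
    assert (E : 2 * r ^ (2 * S n + 4) / (1 - r ^ 2) = 2 * r ^ (2 * n + 4) / (1 - r ^ 2) - 2 * r ^ (2 * n + 4)).
    { replace (2 * S n + 4)%nat with ((2 * n + 4) + 2)%nat by lia. rewrite pow_add. field. lra. }
    rewrite E. lra.
Qed.

Lemma Sp_bound n : Cmod (Sp q n) <= Bnd.
Proof.
  pose proof r_ge0. assert (Hr2 : 0 < 1 - r ^ 2) by (simpl; nra).
  assert (0 <= 2 * r ^ 4 / (1 - r ^ 2)) by (apply Rmult_le_pos; [pose proof (pow_le r 4 r_ge0); lra | apply Rlt_le, Rinv_0_lt_compat; lra]).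
  unfold Bnd. destruct n.
  - change (Sp q 0) with (RtoC 1). rewrite Cmod_1. lra.
  - eapply Rle_trans. apply Sp_bound_aux.
    assert (0 <= 2 * r ^ (2 * n + 4) / (1 - r ^ 2)) by (apply Rmult_le_pos; [pose proof (pow_le r (2 * n + 4) r_ge0); lra | apply Rlt_le, Rinv_0_lt_compat; lra]).
    assert (r ^ 2 <= r) by (simpl; nra). lra.
Qed.

Lemma L_split n : L q n = Cplus (bp q 0 n) (csum (fun k => term q n (S k)) n).
Proof. unfold L. rewrite csum_shift. f_equal. unfold term. rewrite Nat.mul_0_r. simpl. ring. Qed.

Lemma bp0_upper n : Cmod (bp q 0 n) <= Bnd + M * r ^ n * (r / (1 - r)).
Proof.
  pose proof r_ge0.
  assert (Hb : bp q 0 n = Cminus (Sp q n) (csum (fun k => term q n (S k)) n)).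
  { rewrite <- L_Sp, L_split. ring. }
  rewrite Hb. unfold Cminus. eapply Rle_trans. apply Cmod_triangle. rewrite Cmod_opp.
  apply Rplus_le_compat. apply Sp_bound.
  eapply Rle_trans. apply (csum_norm _ (fun k => (M * r ^ n) * r ^ (S k))).
  - intros k Hk. unfold term. rewrite !Cmod_mult, Cmod_sgn, Cmod_pow, Hr, Rmult_1_l.
    rewrite Rmult_assoc. rewrite <- pow_add. apply Rmult_le_compat.
    apply Cmod_ge_0. apply pow_le; auto. apply Cmod_bp. pose proof (tri_ge (S k)). apply pow_decr; [lra|nia].
  - rewrite rsum_scal. fold (rs n). apply Rmult_le_compat_l.
    apply Rmult_le_pos. unfold M. left; apply exp_pos. apply pow_le; auto.
    apply rs_bound.
Qed.

End Ana.


Lemma filterlim_shift {U} (f : nat -> U) (G : (U -> Prop) -> Prop) :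
  filterlim (fun n => f (S n)) eventually G -> filterlim f eventually G.
Proof.
  intros H P HP. destruct (H P HP) as [N HN]. exists (S N). intros n Hn.
  destruct n. lia. apply HN. lia.
Qed.

Lemma loc_le (x : C) : filter_le (@locally C_UniformSpace x) (@locally (AbsRing_UniformSpace C_AbsRing) x).
Proof. intros P HP. apply (@locally_le_locally_norm C_AbsRing C_NormedModule). exact HP. Qed.

Lemma filterlim_Cmult {T} {F : (T -> Prop) -> Prop} {FF : Filter F} (f g : T -> C) (x y : C) :
  filterlim f F (locally x) -> filterlim g F (locally y) ->
  filterlim (fun t => Cmult (f t) (g t)) F (locally (Cmult x y)).
Proof.
  intros Hf Hg.
  assert (Hf' : filterlim f F (@locally (AbsRing_UniformSpace C_AbsRing) x)).
  { intros P HP. apply Hf. apply loc_le. exact HP. }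
  exact (filterlim_comp_2 f g (fun a b : C => @scal C_AbsRing C_NormedModule a b) Hf' Hg
     (@filterlim_scal C_AbsRing C_NormedModule x y)).
Qed.

Lemma filterlim_Cpow {T} {F : (T -> Prop) -> Prop} {FF : Filter F} (f : T -> C) (x : C) n :
  filterlim f F (locally x) -> filterlim (fun t => Cpow (f t) n) F (locally (Cpow x n)).
Proof.
  intros Hf. induction n.
  - simpl. apply filterlim_const.
  - simpl. apply filterlim_Cmult; auto.
Qed.

Lemma eta_bp q N : eta_partial q N = Cpow (bp q 0 N) 24.
Proof.
  induction N. change (RtoC 1 = Cpow (RtoC 1) 24). rewrite Cpow_1_l. reflexivity.
  simpl eta_partial. rewrite IHN. rewrite bp_S by lia. rewrite Cpow_mult_l. reflexivity.
Qed.

Section Lim.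
Variable q : C.
Variable r : R.
Hypothesis Hr : Cmod q = r.
Hypothesis Hr1 : r < 1.

Lemma bp_conv : exists eta, filterlim (fun n => bp q 0 n) eventually (locally eta).
Proof.
  pose proof (r_ge0 q r Hr) as H0.
  set (a := fun k => Cminus (bp q 0 (S k)) (bp q 0 k)).
  assert (Hex : ex_series a).
  { apply (@ex_series_le C_AbsRing C_CompleteNormedModule a (fun k => M r * r * r ^ k)).
    - intros k. change (Cmod (a k) <= M r * r * r ^ k). unfold a. rewrite bp_S by lia.
      replace (Cminus (Cmult (bp q 0 k) (Cminus (RtoC 1) (Cpow q (S k)))) (bp q 0 k))
        with (Copp (Cmult (bp q 0 k) (Cpow q (S k)))) by ring.
      rewrite Cmod_opp, Cmod_mult, Cmod_pow, Hr.
      rewrite Rmult_assoc. change (r * r ^ k) with (r ^ S k). apply Rmult_le_compat_r. apply pow_le; auto.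
      apply Cmod_bp; auto.
    - apply (ex_series_scal_l (M r * r) (fun k => r ^ k)). apply ex_series_geom.
      rewrite Rabs_pos_eq; auto. }
  destruct Hex as [l Hl].
  assert (Hs : forall n, @eq C (sum_n a n) (Cminus (bp q 0 (S n)) (RtoC 1))).

  { induction n. rewrite sum_O. unfold a. reflexivity.
    rewrite sum_Sn, IHn. unfold a. change plus with Cplus. 
    change (@plus C_AbelianMonoid) with Cplus. ring. }
  exists (Cplus l (RtoC 1)). apply filterlim_shift.
  apply filterlim_ext with (fun n => @plus C_AbelianMonoid (sum_n a n) (RtoC 1)).
  { intros n. change (@eq C (Cplus (sum_n a n) (RtoC 1)) (bp q 0 (S n))). rewrite Hs. ring. }
  apply (filterlim_comp_2 (sum_n a) (fun _ => RtoC 1) (fun u v : C => @plus C_AbelianMonoid u v) Hl (filterlim_const _)).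
  apply (@filterlim_plus C_AbsRing _ l (RtoC 1)).
Qed.


Lemma Cmod_lim (f : nat -> C) (x : C) :
  filterlim f eventually (locally x) -> is_lim_seq (fun n => Cmod (f n)) (Cmod x).
Proof.
  intros H. unfold is_lim_seq.
  apply filterlim_ext with (fun n => @norm C_AbsRing C_NormedModule (f n)).
  { intros n. reflexivity. }
  exact (filterlim_comp _ _ _ f norm _ _ _ H (@filterlim_norm C_AbsRing C_NormedModule x)).
Qed.

Lemma eta_lower eta : filterlim (fun n => bp q 0 n) eventually (locally eta) ->
  1 - r / (1 - r) <= Cmod eta.
Proof.
  intros H. pose proof (Cmod_lim _ _ H) as HL.
  assert (Hle := is_lim_seq_le (fun _ => 1 - r / (1 - r)) (fun n => Cmod (bp q 0 n)) _ _
    (fun n => Rle_trans _ _ _ (Rplus_le_compat_l 1 _ _ (Ropp_le_contravar _ _ (rs_bound q r Hr Hr1 n)))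
                (Cmod_bp0_ge q r Hr Hr1 n)) (is_lim_seq_const _) HL).
  exact Hle.
Qed.

Lemma eta_upper eta : filterlim (fun n => bp q 0 n) eventually (locally eta) ->
  Cmod eta <= Bnd r.
Proof.
  intros H. pose proof (Cmod_lim _ _ H) as HL.
  pose proof (r_ge0 q r Hr).
  assert (Hv : is_lim_seq (fun n => Bnd r + M r * (r / (1 - r)) * r ^ n) (Bnd r + M r * (r / (1 - r)) * 0)).
  { apply is_lim_seq_plus'. apply is_lim_seq_const.
    apply (is_lim_seq_scal_l (fun n => r ^ n) (M r * (r / (1 - r))) 0).
    apply is_lim_seq_geom. rewrite Rabs_pos_eq; auto. }
  assert (Hb : forall n, Cmod (bp q 0 n) <= Bnd r + M r * (r / (1 - r)) * r ^ n).
  { intros n. eapply Rle_trans. apply (bp0_upper q r Hr Hr1 n). lra. }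
  assert (Hle := is_lim_seq_le (fun n => Cmod (bp q 0 n)) (fun n => Bnd r + M r * (r / (1 - r)) * r ^ n) _ _
     Hb HL Hv).
  simpl in Hle. lra.
Qed.

End Lim.


Lemma Cmod_Cexp z : Cmod (Cexp z) = exp (Re z).
Proof.
  unfold Cexp, Cmod. simpl fst; simpl snd.
  pose proof (exp_pos (Re z)).
  replace ((exp (Re z) * cos (Im z)) ^ 2 + (exp (Re z) * sin (Im z)) ^ 2) with
    (exp (Re z) ^ 2 * ((sin (Im z))² + (cos (Im z))²)) by (unfold Rsqr; ring).
  rewrite sin2_cos2, Rmult_1_r. apply sqrt_pow2. lra.
Qed.

Lemma Cmod_qpar tau : Cmod (qpar tau) = exp (-2 * PI * Im tau).
Proof.
  unfold qpar. rewrite Cmod_Cexp. f_equal. unfold Cmult, Re, Im. simpl. ring.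
Qed.



Lemma common tau : 0 < Im tau -> exists eta : C,
  is_Delta tau (Cmult (qpar tau) (Cpow eta 24)) /\
  filterlim (fun n => bp (qpar tau) 0 n) eventually (locally eta).
Proof.
  intros Hy.
  set (r := exp (-2 * PI * Im tau)).
  assert (Hr : Cmod (qpar tau) = r) by apply Cmod_qpar.
  assert (Hr1 : r < 1).
  { unfold r. rewrite <- exp_0. apply exp_increasing. pose proof PI_RGT_0. nra. }
  destruct (bp_conv (qpar tau) r Hr Hr1) as [eta Heta].
  exists eta. split; auto.
  unfold is_Delta, Delta_partial.
  apply filterlim_Cmult. apply filterlim_const.
  apply filterlim_ext with (fun n => Cpow (bp (qpar tau) 0 n) 24).
  { intros n. rewrite eta_bp. reflexivity. }
  apply filterlim_Cpow. exact Heta.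
Qed.

Theorem proposition3p4 :
  (forall tau : C, 0 < Im tau -> exp (-2 * PI * Im tau) <= 1/3 ->
     exists D : C, is_Delta tau D /\
       Cmod D >= exp (-2 * PI * Im tau) *
         (1 - exp (-2 * PI * Im tau) - exp (-4 * PI * Im tau)
            - 2 * exp (-4 * PI * Im tau) / (1 - exp (-2 * PI * Im tau))) ^ 24)
  /\
  (forall tau : C, 0 < Im tau ->
     exists D : C, is_Delta tau D /\
       Cmod D <= exp (-2 * PI * Im tau) *
         (1 + 2 * exp (-2 * PI * Im tau)
            + 2 * exp (-8 * PI * Im tau) / (1 - exp (-4 * PI * Im tau))) ^ 24).
Proof.
  split; intros tau Hy.
  - intros H3.
    destruct (common tau Hy) as [eta [HD Heta]].
    exists (Cmult (qpar tau) (Cpow eta 24)). split; auto.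
    set (r := exp (-2 * PI * Im tau)) in *.
    assert (Hr : Cmod (qpar tau) = r) by apply Cmod_qpar.
    assert (Hr0 : 0 < r) by apply exp_pos.
    assert (E4 : exp (-4 * PI * Im tau) = r ^ 2).
    { replace (-4 * PI * Im tau) with (-2 * PI * Im tau + -2 * PI * Im tau) by ring.
      rewrite exp_plus. simpl. fold r. ring. }
    rewrite E4.
    pose proof (eta_lower (qpar tau) r Hr ltac:(lra) eta Heta) as Hl.
    rewrite Cmod_mult, Cmod_pow, Hr.
    apply Rle_ge. apply Rmult_le_compat_l. lra. apply pow_incr. split.
    + apply Rmult_le_reg_r with (1 - r). lra.
      replace ((1 - r - r ^ 2 - 2 * r ^ 2 / (1 - r)) * (1 - r)) with (1 - 2 * r - 2 * r ^ 2 + r ^ 3) by (field; lra).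
      simpl. nra.
    + eapply Rle_trans; [|exact Hl].
      apply Rmult_le_reg_r with (1 - r). lra.
      replace ((1 - r - r ^ 2 - 2 * r ^ 2 / (1 - r)) * (1 - r)) with (1 - 2 * r - 2 * r ^ 2 + r ^ 3) by (field; lra).
      replace ((1 - r / (1 - r)) * (1 - r)) with (1 - 2 * r) by (field; lra).
      simpl. nra.
  - destruct (common tau Hy) as [eta [HD Heta]].
    exists (Cmult (qpar tau) (Cpow eta 24)). split; auto.
    set (r := exp (-2 * PI * Im tau)) in *.
    assert (Hr : Cmod (qpar tau) = r) by apply Cmod_qpar.
    assert (Hr0 : 0 < r) by apply exp_pos.
    assert (Hr1 : r < 1).
    { unfold r. rewrite <- exp_0. apply exp_increasing. pose proof PI_RGT_0. nra. }
    assert (E4 : exp (-4 * PI * Im tau) = r ^ 2).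
    { replace (-4 * PI * Im tau) with (-2 * PI * Im tau + -2 * PI * Im tau) by ring.
      rewrite exp_plus. simpl. fold r. ring. }
    assert (E8 : exp (-8 * PI * Im tau) = r ^ 4).
    { replace (-8 * PI * Im tau) with (-4 * PI * Im tau + -4 * PI * Im tau) by ring.
      rewrite exp_plus, E4. ring. }
    rewrite E4, E8.
    pose proof (eta_upper (qpar tau) r Hr Hr1 eta Heta) as Hu.
    rewrite Cmod_mult, Cmod_pow, Hr.
    apply Rmult_le_compat_l. lra. apply pow_incr. split.
    + apply Cmod_ge_0.
    + exact Hu.
Qed.
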